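(* Let $p,t\geq 1$ be integers and let $m,n$ be even positive integers with $m\leq n$. Let $G$ be a regular graph of order $p$. If (i) $m+n\equiv 0\pmod 4$ and (ii) $1=2(2ptn+1)^2-(2ptm+2ptn+1)^2$ or $m\geq(\sqrt2-1)n+\frac{\sqrt2-1}{2pt}$, then $tK_{m,n}\otimes G$ is distance magic.
   Context: A graph $G$ on $v$ vertices is distance magic if there is a bijection $f:V(G)\to\{1,\ldots,v\}$ and a constant $k$ such that for every vertex $x$, $\sum_{y\in N(x)}f(y)=k$, where $N(x)$ is the set of neighbours of $x$. $K_{m,n}$ is the complete bipartite graph with parts of sizes $m$ and $n$; $tH$ denotes the disjoint union of $t$ copies of $H$. The Kronecker (tensor) product $G\otimes H$ has vertex set $V(G)\times V(H)$, with $(g,h)\sim(g',h')$ iff $gg'\in E(G)$ and $hh'\in E(H)$. *)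

(* Defs.v *)
From Stdlib Require Import Reals ZArith.
From mathcomp Require Import all_boot.

Set Implicit Arguments.
Unset Strict Implicit.
Unset Printing Implicit Defensive.

Definition simple_graph (V : finType) (e : rel V) : Prop :=
  symmetric e /\ irreflexive e.

Definition regular (V : finType) (e : rel V) : Prop :=
  exists r : nat, forall x : V, #|[set y | e x y]| = r.

(* Distance magic: a bijection f : V -> {1,...,|V|} and a constant k with
   sum_{y in N(x)} f y = k for all x.  (An injective map of V into
   {1,...,|V|} is exactly a bijection onto it.) *)
Definition distance_magic (V : finType) (e : rel V) : Prop :=
  exists f : V -> nat,
    injective f /\ (forall x, 1 <= f x <= #|V|) /\
    exists k : nat, forall x : V, \sum_(y | e x y) f y = k.

Definition kron_rel (V W : finType) (e1 : rel V) (e2 : rel W) : rel (V * W) :=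
  fun u v => e1 u.1 v.1 && e2 u.2 v.2.

Definition tKmn_rel (t m n : nat) : rel ('I_t * ('I_m + 'I_n)) :=
  fun u v =>
    (u.1 == v.1) &&
    match u.2, v.2 with
    | inl _, inr _ => true
    | inr _, inl _ => true
    | _, _ => false
    end.

Definition cond_pell (p t m n : nat) : Prop :=
  let P := Z.of_nat p in let T := Z.of_nat t in
  let M := Z.of_nat m in let N := Z.of_nat n in
  (1 = 2 * (2*P*T*N + 1)^2 - (2*P*T*M + 2*P*T*N + 1)^2)%Z.

Section Reals_cond.
Local Open Scope R_scope.
Definition cond_ineq (p t m n : nat) : Prop :=
  (INR m >= (sqrt 2 - 1) * INR n + (sqrt 2 - 1) / (2 * INR p * INR t)).
End Reals_cond.

Arguments tKmn_rel : clear implicits.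

(* Main.v *)
Require Import Defs.
From Stdlib Require Import Reals ZArith Lra Lia Psatz.
From mathcomp Require Import all_boot zify.
Set Implicit Arguments. Unset Strict Implicit. Unset Printing Implicit Defensive.

Lemma sum_pairs (g : nat -> nat) c k : (forall i, g i + g i.+1 = c) ->
  \sum_(i < 2 * k) g i = k * c.
Proof.
move=> H; elim: k => [|k IH]; first by rewrite big_ord0.
have -> : 2 * k.+1 = (2 * k).+2 by lia.
by rewrite !big_ord_recr /= IH -addnA H mulSn addnC.
Qed.

Lemma sum_id2 m : 2 * \sum_(i < m) i = m * (m - 1).
Proof.
elim: m => [|m IH]; first by rewrite big_ord0.
rewrite big_ord_recr /= mulnDr IH; case: m {IH} => //= m; nia.
Qed.

Lemma sum_ge m c : \sum_(i < m) (c <= i) = m - c.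
Proof.
elim: m => [|m IH]; first by rewrite big_ord0.
rewrite big_ord_recr /= IH; case: leqP; lia.
Qed.

Lemma sum_eqk m k c : \sum_(i < m) (if (i : nat) == k then c else 0) = if k < m then c else 0.
Proof.
elim: m => [|m IH]; first by rewrite big_ord0.
rewrite big_ord_recr /= IH.
case: (ltngtP k m) => h; try subst k.
all: repeat (case: ifP => ?); lia.
Qed.

Lemma sum1_ord m : \sum_(i < m) 1 = m.
Proof. by rewrite sum_nat_const card_ord muln1. Qed.

Definition rowX (a e m i : nat) := if i < m - e then a + i else (a + i).+1.
Definition rowY (a e m j : nat) :=
  if j < a then j else if j == a then a + m - e else j + m.
Definition offv (inc : bool) (q b : nat) := if inc then b else q - 1 - b.
Definition i0 (m e : nat) := m - e - 1.
Definition rX q a e m rho i b :=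
  if i == i0 m e then (if b + rho < q then a + m - e - 1 else a + m - e)
  else rowX a e m i.
Definition oX q e m rho i b :=
  if i == i0 m e then (if b + rho < q then b + rho else b + rho - q)
  else offv (~~ odd (i + i0 m e)) q b.
Definition j1 (a n : nat) := if a.+2 < n then a.+2 else a - 2.
Definition rY a e m rho j b :=
  if j == a then (if b < rho then a + m - e - 1 else a + m - e)
  else rowY a e m j.
Definition oY q a n rho j b :=
  if j == a then b
  else if (0 < rho) && (j == j1 a n) then (if b < rho then b + q - rho else b - rho)
  else offv (~~ odd (j + a)) q b.

Lemma rq_inj q r o r' o' : o < q -> o' < q -> r * q + o = r' * q + o' ->
  r = r' /\ o = o'.
Proof.
move=> ho ho' E.
have q0 : 0 < q by lia.
have := congr1 (divn^~ q) E; have := congr1 (modn^~ q) E.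
rewrite /= !modnMDl !divnMDl // !modn_small // !divn_small //.
by rewrite !addn0 => -> ->.
Qed.


Lemma rowX_inj a e m i i' : i < m -> i' < m -> rowX a e m i = rowX a e m i' -> i = i'.
Proof. rewrite /rowX; case: ifP; case: ifP; lia. Qed.

Ltac crush := rewrite /rX /oX /rY /oY /rowX /rowY /offv /i0 /j1;
  repeat (case: ifP => ?); try lia.

Lemma cellXX q a e m n rho i b i' b' :
  e < m -> a <= n -> (a = n -> e = 0) -> (0 < rho -> a < n) -> rho < q ->
  i < m -> b < q -> i' < m -> b' < q ->
  rX q a e m rho i b = rX q a e m rho i' b' ->
  oX q e m rho i b = oX q e m rho i' b' -> i = i' /\ b = b'.
Proof.
move=> He Ha Han Hra Hr Hi Hb Hi' Hb'.
case: (eqVneq i (i0 m e)) => [->|H1]; case: (eqVneq i' (i0 m e)) => [->|H2];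
 rewrite /rX /oX ?eqxx ?(negbTE H1) ?(negbTE H2).
- move: Hb Hb' Hr; rewrite /i0; repeat (case: ifP => ?); lia.
- move: H2 Hi' Hb Hb' Hr; rewrite /rowX /i0; repeat (case: ifP => ?); lia.
- move: H1 Hi Hb Hb' Hr; rewrite /rowX /i0; repeat (case: ifP => ?); lia.
- move=> E E2; have ? := rowX_inj Hi Hi' E; subst i'; split=> //.
  move: E2 Hb Hb'; rewrite /offv; case: ifP => _; lia.
Qed.

Lemma rowY_inj a e m j j' : e < m -> rowY a e m j = rowY a e m j' -> j = j'.
Proof. rewrite /rowY; repeat case: ifP; lia. Qed.

Lemma cellYY q a e m n rho j b j' b' :
  e < m -> rho < q -> b < q -> b' < q ->
  rY a e m rho j b = rY a e m rho j' b' ->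
  oY q a n rho j b = oY q a n rho j' b' -> j = j' /\ b = b'.
Proof.
move=> He Hr Hb Hb'.
case: (eqVneq j a) => [->|H1]; case: (eqVneq j' a) => [->|H2];
 rewrite /rY /oY ?eqxx ?(negbTE H1) ?(negbTE H2).
- by move=> _ ->.
- move: H2 Hb Hb' Hr; rewrite /rowY; repeat (case: ifP => ?); lia.
- move: H1 Hb Hb' Hr; rewrite /rowY; repeat (case: ifP => ?); lia.
- move=> E E2; have ? := rowY_inj He E; subst j'; split=> //.
  move: E2 Hb Hb' Hr; rewrite /offv; repeat (case: ifP => ?); lia.
Qed.

Lemma cellXY q a e m n rho i b j b' :
  e < m -> rho < q -> i < m -> b < q -> b' < q ->
  rX q a e m rho i b = rY a e m rho j b' ->
  oX q e m rho i b = oY q a n rho j b' -> False.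
Proof.
move=> He Hr Hi Hb Hb'.
case: (eqVneq i (i0 m e)) => [->|H1]; case: (eqVneq j a) => [->|H2];
 rewrite /rX /oX /rY /oY ?eqxx ?(negbTE H1) ?(negbTE H2).
- move: Hb Hb' Hr; rewrite /i0; repeat (case: ifP => ?); lia.
- move=> E _; move: E H2 Hb Hb' Hr; rewrite /rowY /i0; repeat (case: ifP => ?); lia.
- move=> E _; move: E H1 Hi Hb Hb' Hr; rewrite /rowX /i0; repeat (case: ifP => ?); lia.
- move=> E _; move: E H1 H2 Hi; rewrite /rowX /rowY /i0; repeat (case: ifP => ?); lia.
Qed.

Lemma cellX_bound q a e m n rho i b :
  e < m -> a <= n -> (a = n -> e = 0) -> (0 < rho -> a < n) -> rho < q ->
  i < m -> b < q -> rX q a e m rho i b < m + n /\ oX q e m rho i b < q.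
Proof.
move=> He Ha Han Hra Hr Hi Hb.
rewrite /rX /oX /rowX /offv /i0; repeat (case: ifP => ?); lia.
Qed.

Lemma cellY_bound q a e m n rho j b :
  e < m -> a <= n -> (a = n -> e = 0) -> (0 < rho -> a < n) -> rho < q ->
  j < n -> b < q -> rY a e m rho j b < m + n /\ oY q a n rho j b < q.
Proof.
move=> He Ha Han Hra Hr Hj Hb.
rewrite /rY /oY /rowY /offv /j1; repeat (case: ifP => ?); lia.
Qed.

Lemma ptX q a e m rho i b : e < m -> rho < q -> i < m -> b < q ->
  (rX q a e m rho i b * q + oX q e m rho i b).+1 =
  a * q + i * q + (m - e <= i) * q + offv (~~ odd (i + i0 m e)) q b
  + (if i == i0 m e then rho else 0) + 1.
Proof.
move=> He Hr Hi Hb.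
rewrite /rX /oX /rowX.
case: (eqVneq i (i0 m e)) => [->|H1].
- rewrite addnn odd_double /offv /= /i0.
  repeat (case: ifP => ?); nia.
- case: ifP => h; rewrite /= ?mulSn; case: leqP; lia.
Qed.

Lemma sumX q a e m m' rho dl d h b : 0 < q -> m = 2 * m' -> e < m -> rho < q ->
  d = dl * q + rho -> h = m' + d -> a * m + e + 2 * m' ^ 2 = 4 * h ^ 2 + dl ->
  b < q ->
  \sum_(i < m) (rX q a e m rho i b * q + oX q e m rho i b).+1 = h * (4 * q * h + 1).
Proof.
move=> Hq Hm He Hr Hd Hh HT Hb.
rewrite (eq_bigr (fun i : 'I_m => a * q + i * q + (m - e <= i) * q
   + offv (~~ odd (i + i0 m e)) q b + (if (i : nat) == i0 m e then rho else 0) + 1)); last first.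
  by move=> i _; rewrite ptX.
rewrite !big_split /= sum_nat_const card_ord -!big_distrl /= sum_ge sum_eqk sum1_ord.
have Ho : \sum_(i < m) offv (~~ odd (i + i0 m e)) q b = m' * (q - 1).
  rewrite Hm; apply: (@sum_pairs (fun i => offv (~~ odd (i + i0 (2 * m') e)) q b)) => i; rewrite addSn oddS negbK /offv.
  case: (odd _) => /=; lia.
rewrite Ho.
have Hs := sum_id2 m.
set S := \sum_(i < m) i in Hs *.
have -> : i0 m e < m = true by rewrite /i0; lia.
have E1 : S + m' = 2 * m' * m' by subst m; nia.
have E2 : m' * (q - 1) + m' = m' * q by rewrite -mulnSr; congr (_ * _); lia.
have E3 : m - (m - e) = e by lia.
rewrite E3.
have HT' := congr1 (muln q) HT.
have E1' := congr1 (muln q) E1.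
subst m h d; lia.
Qed.

Lemma j1_facts a n : 6 <= n -> a < n ->
  j1 a n < n /\ j1 a n != a /\ ~~ odd (j1 a n + a).
Proof.
move=> Hn Ha; rewrite /j1; case: ifP => h.
- split; first lia. split; first lia.
  have -> : a.+2 + a = (a.+1).*2 by lia.
  by rewrite odd_double.
- split; first lia. split; first lia.
  have -> : a - 2 + a = (a - 1).*2 by lia.
  by rewrite odd_double.
Qed.

Lemma ptY q a e m n rho j b : e < m -> rho < q -> b < q ->
  (0 < rho -> j1 a n != a /\ ~~ odd (j1 a n + a)) ->
  (rY a e m rho j b * q + oY q a n rho j b).+1
   + (if j == a then (if b < rho then q else 0) else 0)
   + (if j == j1 a n then (if 0 < rho then rho else 0) else 0)
  = j * q + (if j == a then (m - e) * q else 0) + (a < j) * (m * q)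
    + offv (~~ odd (j + a)) q b + 1
    + (if j == j1 a n then (if 0 < rho then (if b < rho then q else 0) else 0) else 0).
Proof.
move=> He Hr Hb Hj.
rewrite /rY /oY /rowY.
case: (eqVneq j a) => [->|H1].
- rewrite addnn odd_double /offv /= ltnn.
  case: (posnP rho) => [r0|rp].
  + rewrite r0 /=; case: ifP => _; nia.
  + have [Hne _] := Hj rp.
    rewrite eq_sym (negbTE Hne) /=; case: ifP => _; nia.
- rewrite ?(negbTE H1) /=.
  have Hja : (j < a) && ~~ (a < j) || ~~ (j < a) && (a < j).
    by move: H1; case: (ltngtP j a) => //= ->; rewrite eqxx.
  case/orP: Hja => /andP [Hx Hy].
  + rewrite Hx (negbTE Hy) /= ?mul0n ?addn0.
    case: (posnP rho) => [r0|rp].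
    * rewrite r0 /= /offv; repeat (case: ifP => ?); nia.
    * have [Hne Hodd] := Hj rp.
      case: (eqVneq j (j1 a n)) => [Ej|Nj].
      - rewrite Ej in Hx H1 *; rewrite ?eqxx ?Hodd /offv /= ?rp /=.
        repeat (case: ifP => ?); nia.
      - rewrite ?(negbTE Nj) ?andbF /=.
        repeat (case: ifP => ?); nia.
  + rewrite (negbTE Hx) Hy /= mul1n.
    case: (posnP rho) => [r0|rp].
    * rewrite r0 /= /offv; repeat (case: ifP => ?); nia.
    * have [Hne Hodd] := Hj rp.
      case: (eqVneq j (j1 a n)) => [Ej|Nj].
      - rewrite Ej in Hy H1 *; rewrite ?eqxx ?Hodd /offv /= ?rp /=.
        repeat (case: ifP => ?); nia.
      - rewrite ?(negbTE Nj) ?andbF /=.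
        repeat (case: ifP => ?); nia.
Qed.

Lemma sumY q a e m m' n rho dl d h b : 0 < q -> m = 2 * m' -> 0 < m' ->
  n = 2 * m' + 4 * d -> e < m -> rho < q ->
  d = dl * q + rho -> h = m' + d -> a * m + e + 2 * m' ^ 2 = 4 * h ^ 2 + dl ->
  a <= n -> (a = n -> e = 0) -> (0 < rho -> a < n) -> b < q ->
  \sum_(j < n) (rY a e m rho j b * q + oY q a n rho j b).+1 = h * (4 * q * h + 1).
Proof.
move=> Hq Hm Hm' Hn He Hr Hd Hh HT Ha Han Hra Hb.
have Hj : 0 < rho -> j1 a n != a /\ ~~ odd (j1 a n + a).
  move=> rp; have H6 : 6 <= n by lia.
  by case: (j1_facts H6 (Hra rp)).
have Hsum : \sum_(j < n) ((rY a e m rho j b * q + oY q a n rho j b).+1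
   + (if (j : nat) == a then (if b < rho then q else 0) else 0)
   + (if (j : nat) == j1 a n then (if 0 < rho then rho else 0) else 0))
  = \sum_(j < n) (j * q + (if (j : nat) == a then (m - e) * q else 0) + (a < j) * (m * q)
    + offv (~~ odd (j + a)) q b + 1
    + (if (j : nat) == j1 a n then (if 0 < rho then (if b < rho then q else 0) else 0) else 0)).
  by apply: eq_bigr => j _; apply: ptY.
rewrite !big_split /= in Hsum.
rewrite !sum_eqk in Hsum.
rewrite -!big_distrl /= sum_ge sum1_ord in Hsum.
have Ho : \sum_(j < n) offv (~~ odd (j + a)) q b = (m' + 2 * d) * (q - 1).
  have -> : n = 2 * (m' + 2 * d) by lia.
  apply: (@sum_pairs (fun j => offv (~~ odd (j + a)) q b)) => i.
  rewrite addSn oddS negbK /offv.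
  case: (odd _) => /=; lia.
rewrite Ho in Hsum.
have Hs := sum_id2 n.
move: Hsum Hs.
set S := \sum_(i < n) i.
set L := \sum_(i < n) _.
move=> Hsum Hs.
set n2 := m' + 2 * d in Ho Hsum.
have Hnn : n * (n - 1) + n = n * n.
  by case: (n) => //= k; rewrite subn1 /= mulnSr.
have E1 : S + n2 = 2 * n2 * n2.
  have Hn2 : n = 2 * n2 by rewrite /n2; lia.
  rewrite Hn2 in Hs Hnn; lia.
have E2 : n2 * (q - 1) + n2 = n2 * q
  by rewrite -mulnSr; congr (_ * _); lia.
have HT' := congr1 (muln q) HT.
have E1' := congr1 (muln q) E1.
move: Hsum E2.
move: (n2 * (q - 1)) => v Hsum E2.
case: (ltnP a n) => Han'.
- have P2 : (n - a.+1) * (m * q) + a * (m * q) + m * q = n * (m * q).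
    transitivity ((n - a.+1 + a + 1) * (m * q)); first by rewrite !mulnDl mul1n.
    by congr (_ * _); lia.
  have P1 : (m - e) * q + e * q = m * q by rewrite -mulnDl subnK // ltnW.
  move: Hsum P1 P2; rewrite Han'.
  move: ((m - e) * q) ((n - a.+1) * (m * q)) => u w.
  case: (posnP rho) => [r0|rp].
  + rewrite r0 /= ?ltn0 => Hsum P1 P2.
    rewrite /n2 in E1' E2 Hsum; subst m h d n; lia.
  + have H6 : 6 <= n by lia.
    have [Hj1 _] := j1_facts H6 Han'.
    rewrite Hj1 /= ?rp /= => Hsum P1 P2.
    move: Hsum; case: ifP => _ Hsum;
    rewrite /n2 in E1' E2 Hsum; subst m h d n; lia.
- have an : a = n by lia.
  have e0 := Han an.
  have r0 : rho = 0 by case: (posnP rho) => // rp; have := Hra rp; lia.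
  have P2 : (n - a.+1) = 0 by lia.
  move: Hsum; rewrite r0 P2 /= ?ltn0 !if_same => Hsum.
  rewrite /n2 in E1' E2 Hsum; subst; rewrite ltnn in Hsum; lia.
Qed.

Lemma feas_pell p t m n : 1 <= p -> 1 <= t -> cond_pell p t m n ->
  2 * (p * t) * n * n + n <= (p * t) * (m + n) * (m + n) + m.
Proof.
rewrite /cond_pell => Hp Ht H.
have HP : (1 <= Z.of_nat p)%Z by lia.
have HT : (1 <= Z.of_nat t)%Z by lia.
set P := Z.of_nat p in H HP; set T := Z.of_nat t in H HT.
set M := Z.of_nat m in H; set N := Z.of_nat n in H.
have K : (4 * (P * T) * (2 * (P * T) * N * N + 2 * N - (P * T) * (M + N) * (M + N) - (M + N)) = 0)%Z.
  lia.
have Q0 : (4 * (P * T) <> 0)%Z by nia.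
have K2 := proj1 (Z.mul_eq_0 _ _) K.
case: K2 => // K2.
rewrite /P /T /M /N in K2.
lia.
Qed.

Open Scope R_scope.
Lemma feas_ineq p t m n : (1 <= p)%N -> (1 <= t)%N -> cond_ineq p t m n ->
  (2 * (p * t) * n * n + n <= (p * t) * (m + n) * (m + n) + m)%N.
Proof.
rewrite /cond_ineq => Hp Ht H.
apply/leP; apply INR_le.
rewrite -!multE -!plusE !plus_INR !mult_INR !plus_INR.
have E2 : INR 2 = 2 by simpl; ring.
rewrite E2.
have HP : 1 <= INR p by apply: (le_INR 1); apply/leP.
have HT : 1 <= INR t by apply: (le_INR 1); apply/leP.
have HM := pos_INR m. have HN := pos_INR n.
move: H HP HT HM HN.
set P := INR p; set T := INR t; set M := INR m; set N := INR n.
move=> H HP HT HM HN.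
match type of H with context [sqrt ?x] => set s := sqrt x in H |- * ; have hs : s * s = 2 by rewrite /s; apply: sqrt_sqrt; lra end.
have hs0 : 0 <= s by apply: sqrt_pos.
set u := / (2 * P * T).
have Hu : 2 * P * T * u = 1 by rewrite /u; field; nra.
have Hu0 : 0 < u by rewrite /u; apply: Rinv_0_lt_compat; nra.
have E : (s - 1) / (2 * P * T) = (s - 1) * u by rewrite /u; field; nra.
rewrite E in H.
clearbody u s P T M N.
have H1 : M + N + u >= s * (N + u).
  have E3 : s * (N + u) = (s - 1) * N + (s - 1) * u + N + u by ring.
  rewrite E3; move: H; generalize ((s - 1) * N) ((s - 1) * u) => A B H; lra.
have H2 : (M + N + u) * (M + N + u) >= 2 * ((N + u) * (N + u)).
  have B0 : 0 <= s * (N + u) by nra.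
  have : (s * (N + u)) * (s * (N + u)) = 2 * ((N + u) * (N + u)).
    by rewrite -hs; ring.
  nra.
have Q0 : 0 < P * T by nra.
have H3 : P * T * ((M + N + u) * (M + N + u)) >= P * T * (2 * ((N + u) * (N + u))).
  by apply: Rmult_ge_compat_l; lra.
nra.
Qed.

Close Scope R_scope.


Lemma cell_lt K q r o : r < K -> o < q -> r * q + o < K * q.
Proof. move=> h1 h2; have : r.+1 * q <= K * q by rewrite leq_mul2r h1 orbT. rewrite mulSn; lia. Qed.

Unset Implicit Arguments.

Theorem theorem20 (p t m n : nat) (V : finType) (e : rel V) :
  1 <= p -> 1 <= t ->
  0 < m -> 0 < n -> ~~ odd m -> ~~ odd n -> m <= n ->
  simple_graph e -> regular e -> #|V| = p ->
  (m + n) %% 4 = 0 ->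
  (cond_pell p t m n \/ cond_ineq p t m n) ->
  distance_magic (kron_rel (tKmn_rel t m n) e).
Proof.
move=> Hp Ht Hm0 Hn0 Hmo Hno Hmn Hsg [r Hr] HV H4 Hc.
have Hfe : 2 * (p * t) * n * n + n <= (p * t) * (m + n) * (m + n) + m.
  by case: Hc => H; [exact: feas_pell Hp Ht H | exact: feas_ineq Hp Ht H].
set q := t * p.
have Hpt : p * t = q by rewrite /q mulnC.
rewrite Hpt in Hfe.
have Hq : 0 < q by rewrite muln_gt0 Ht Hp.
have Hmd := odd_double_half m; rewrite (negbTE Hmo) add0n in Hmd.
have Hnd := odd_double_half n; rewrite (negbTE Hno) add0n in Hnd.
set m' := m./2 in Hmd.
set d := (n - m) %/ 4.
have Hn : n = 2 * m' + 4 * d by rewrite /d; lia.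
have Hm : m = 2 * m' by lia.
have Hm' : 0 < m' by lia.
set dl := d %/ q; set rho := d %% q.
have Hd : d = dl * q + rho by exact: divn_eq.
have Hrho : rho < q by rewrite ltn_mod.
clearbody m' d dl rho.
set h := m' + d.
have Hfe' : 4 * q * d * d + d <= 2 * q * m' * m'.
  move: Hfe; rewrite Hn Hm. lia.
set T := 4 * h ^ 2 + dl - 2 * m' ^ 2.
set a := T %/ m; set e0 := T %% m.
have HT : a * m + e0 + 2 * m' ^ 2 = 4 * h ^ 2 + dl.
  have := divn_eq T m; have : 2 * m' ^ 2 <= 4 * h ^ 2 + dl.
    have H1 : m' * m' <= h * h by apply: leq_mul; rewrite /h; lia.
    rewrite -!mulnn; lia.
  rewrite /T /a /e0. lia.
have He : e0 < m by rewrite /e0 ltn_mod; lia.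
have Hh : h = m' + d by [].
clearbody a e0 T h.
have Hfeas : q * (a * m + e0) + rho <= q * (m * n).
  have HT' := congr1 (muln q) HT.
  rewrite Hh in HT'; rewrite Hm Hn in HT' *.
  rewrite -!mulnn in HT'; lia.
have Ha : a <= n.
  have : a * (q * m) <= n * (q * m) by lia.
  by rewrite leq_pmul2r // muln_gt0 Hq; lia.
have Han : a = n -> e0 = 0.
  move=> an; rewrite an in Hfeas.
  have : q * e0 = 0 by lia.
  move/eqP; rewrite muln_eq0 => /orP [/eqP|/eqP]; lia.
have Hra : 0 < rho -> a < n.
  move=> rp; rewrite ltn_neqAle Ha andbT; apply/eqP => an.
  rewrite an in Hfeas; lia.
pose bidx (c : 'I_t) (g : V) : nat := c + t * enum_rank g.
have Hb : forall c g, bidx c g < q.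
  move=> c g; rewrite /bidx /q.
  have hg : (enum_rank g : nat) < p := leq_trans (ltn_ord (enum_rank g)) (eq_leq HV).
  have := ltn_ord c => hc.
  have : t * (enum_rank g).+1 <= t * p by rewrite leq_mul2l hg orbT.
  rewrite mulnS; lia.
have Hbinj : forall c g c' g', bidx c g = bidx c' g' -> c = c' /\ g = g'.
  move=> c g c' g'; rewrite /bidx => E.
  have E' : enum_rank g * t + c = enum_rank g' * t + c' by lia.
  have [E1 E2] := rq_inj (ltn_ord c) (ltn_ord c') E'.
  split; first exact: val_inj.
  by apply: enum_rank_inj; apply: val_inj.
pose fX i b := rX q a e0 m rho i b * q + oX q e0 m rho i b.
pose fY j b := rY a e0 m rho j b * q + oY q a n rho j b.
pose f (v : ('I_t * ('I_m + 'I_n)) * V) :=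
  match v.1.2 with
  | inl i => (fX i (bidx v.1.1 v.2)).+1
  | inr j => (fY j (bidx v.1.1 v.2)).+1
  end.
have SX : forall b, b < q -> \sum_(i < m) (fX i b).+1 = h * (4 * q * h + 1).
  move=> b hb; exact: (sumX Hq Hm He Hrho Hd Hh HT hb).
have SY : forall b, b < q -> \sum_(j < n) (fY j b).+1 = h * (4 * q * h + 1).
  move=> b hb; exact: (sumY Hq Hm Hm' Hn He Hrho Hd Hh HT Ha Han Hra hb).
exists f; split; [|split].
- move=> [[c s] g] [[c' s'] g']; rewrite /f /=.
  case: s => i; case: s' => i' /= [] E.
  + have [r1 o1] := cellX_bound He Ha Han Hra Hrho (ltn_ord i) (Hb c g).
    have [r2 o2] := cellX_bound He Ha Han Hra Hrho (ltn_ord i') (Hb c' g').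
    have [E1 E2] := rq_inj o1 o2 E.
    have [ei eb] := cellXX He Ha Han Hra Hrho (ltn_ord i) (Hb c g) (ltn_ord i') (Hb c' g') E1 E2.
    have [ec eg] := Hbinj _ _ _ _ eb.
    move/val_inj: ei => ei; by subst.
  + have [r1 o1] := cellX_bound He Ha Han Hra Hrho (ltn_ord i) (Hb c g).
    have [r2 o2] := cellY_bound He Ha Han Hra Hrho (ltn_ord i') (Hb c' g').
    have [E1 E2] := rq_inj o1 o2 E.
    by case: (cellXY He Hrho (ltn_ord i) (Hb c g) (Hb c' g') E1 E2).
  + have [r1 o1] := cellY_bound He Ha Han Hra Hrho (ltn_ord i) (Hb c g).
    have [r2 o2] := cellX_bound He Ha Han Hra Hrho (ltn_ord i') (Hb c' g').
    have [E1 E2] := rq_inj o2 o1 (esym E).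
    by case: (cellXY He Hrho (ltn_ord i') (Hb c' g') (Hb c g) E1 E2).
  + have [r1 o1] := cellY_bound He Ha Han Hra Hrho (ltn_ord i) (Hb c g).
    have [r2 o2] := cellY_bound He Ha Han Hra Hrho (ltn_ord i') (Hb c' g').
    have [E1 E2] := rq_inj o1 o2 E.
    have [ei eb] := cellYY He Hrho (Hb c g) (Hb c' g') E1 E2.
    have [ec eg] := Hbinj _ _ _ _ eb.
    move/val_inj: ei => ei; by subst.
- move=> [[c s] g]; rewrite !card_prod card_sum !card_ord HV /f /=.
  case: s => i /=.
  + have [r1 o1] := cellX_bound He Ha Han Hra Hrho (ltn_ord i) (Hb c g).
    have := cell_lt r1 o1; rewrite /fX /q; lia.
  + have [r1 o1] := cellY_bound He Ha Han Hra Hrho (ltn_ord i) (Hb c g).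
    have := cell_lt r1 o1; rewrite /fY /q; lia.
set A := h * (4 * q * h + 1).
have inner : forall c s h0,
    \sum_(u : 'I_t * ('I_m + 'I_n) | tKmn_rel t m n (c, s) u) f (u, h0) = A.
  move=> c s h0.
  rewrite (eq_bigr (fun u => (fun c' s' => f ((c', s'), h0)) u.1 u.2)); last by case.
  rewrite (eq_bigl (fun u => (fun c' => c == c') u.1 &&
     (fun (c' : 'I_t) (s' : 'I_m + 'I_n) => match s, s' with
       | inl _, inr _ => true | inr _, inl _ => true | _, _ => false end) u.1 u.2)); last by case.
  rewrite -(pair_big_dep (fun c' => c == c')
     (fun (c' : 'I_t) (s' : 'I_m + 'I_n) => match s, s' with
       | inl _, inr _ => true | inr _, inl _ => true | _, _ => false end)
     (fun c' s' => f ((c', s'), h0))).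
  rewrite (eq_bigl (fun c' => c' == c)); last by move=> c'; rewrite eq_sym.
  rewrite big_pred1_eq big_sumType /=.
  case: s => i /=.
  - rewrite big_pred0_eq add0n /f /=; exact: SY.
  - rewrite big_pred0_eq addn0 /f /=; exact: SX.
exists (A * r).
move=> [[c s] g].
rewrite (eq_bigr (fun y => (fun u h0 => f (u, h0)) y.1 y.2)); last by case.
rewrite (eq_bigl (fun y => (fun u => tKmn_rel t m n (c, s) u) y.1 &&
   (fun (u : 'I_t * ('I_m + 'I_n)) h0 => e g h0) y.1 y.2)); last by [].
rewrite -(pair_big_dep (fun u => tKmn_rel t m n (c, s) u)
   (fun (u : 'I_t * ('I_m + 'I_n)) h0 => e g h0) (fun u h0 => f (u, h0))).
rewrite exchange_big /=.
rewrite (eq_bigr (fun _ => A)); last by move=> h0 _; exact: inner.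
rewrite (eq_bigl (fun y => y \in [set y | e g y])); last by move=> y; rewrite inE.
by rewrite sum_nat_const Hr mulnC.
Qed.
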